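(* Assume the general-case standing hypotheses, let $\sigma\in(0,1)$, $\mu^+=\sigma\mu$, $C_1>0$. Then there exist $\rho>0$, $\bar\mu\in(0,\hat\mu]$ and $C>0$ such that for all $\mu\in(0,\bar\mu]$ and all $(x,\lambda)\in\mathcal B((x^*,\lambda^* ),\delta)$ with $l<x<u$, $\lambda^l,\lambda^u>0$, $\|(x,\lambda)-(x^\mu,\lambda^\mu)\|<\rho$, $\|F_\mu(x,\lambda)\|\le C_1\mu$, the direction $(\Delta x,\Delta\lambda^l,\Delta\lambda^u)$ below is well defined and $$\|(\Delta x,\Delta\lambda^l,\Delta\lambda^u)-(\Delta x^N,\Delta\lambda^{l,N},\Delta\lambda^{u,N})\|\le C\mu^2.$$ Construction (write $H=\nabla^2f(x)$): (i) for $i\in\mathcal A_x$, $\Delta x_i\in\{\Delta x_i^S,\Delta x_i^C\}$ (arbitrary per index). (ii) $\Delta x_{\mathcal I_x}=\Delta x^{ls}_{\mathcal I_x}$ is the solution of the linear system, for $i\in\mathcal I_x$, $$\sum_{j\in\mathcal I_x}H_{ij}\Delta x_j+\Big(\frac{\lambda^l_i}{x_i-l_i}+\frac{\lambda^u_i}{u_i-x_i}\Big)\Delta x_i=-[\nabla f(x)]_i-\sum_{j\in\mathcal A_x}H_{ij}\Delta x_j+\frac{\mu^+}{x_i-l_i}-\frac{\mu^+}{u_i-x_i}.$$ (iii) For $i\in\mathcal I_l$ set $\Delta\lambda^{l,ls}_i=-\lambda^l_i+\frac{\mu^+-\lambda^l_i\Delta x_i}{x_i-l_i}$, and for $i\in\mathcal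 I_u$ set $\Delta\lambda^{u,ls}_i=-\lambda^u_i+\frac{\mu^++\lambda^u_i\Delta x_i}{u_i-x_i}$; take $\Delta\lambda^l_i\in\{\Delta\lambda^{l,ls}_i,\Delta\lambda^{l,C}_i\}$ ($i\in\mathcal I_l$) and $\Delta\lambda^u_i\in\{\Delta\lambda^{u,ls}_i,\Delta\lambda^{u,C}_i\}$ ($i\in\mathcal I_u$). (iv) For $i\in\mathcal A_x$ let $r_i=[\nabla f(x)]_i-\lambda^l_i+\lambda^u_i+\sum_{j=1}^nH_{ij}\Delta x_j-[i\in\mathcal I_l]\Delta\lambda^{l,ls}_i+[i\in\mathcal I_u]\Delta\lambda^{u,ls}_i$. For $i\in\mathcal A_l$ take $\Delta\lambda^l_i\in\{\Delta\lambda^{l,b}_i,\Delta\lambda^{l,ls}_i\}$ with $\Delta\lambda^{l,b}_i=r_i$ and $\Delta\lambda^{l,ls}_i=\frac{r_i-(x_i-l_i)\big(\lambda^l_i(x_i-l_i)-\mu^++\lambda^l_i\Delta x_i\big)}{1+(x_i-l_i)^2}$; for $i\in\mathcal A_u$ take $\Delta\lambda^u_i\in\{\Delta\lambda^{u,b}_i,\Delta\lambda^{u,ls}_i\}$ with $\Delta\lambda^{u,b}_i=-r_i$ and $\Delta\lambda^{u,ls}_i=-\frac{r_i+(u_i-x_i)\big(\lambda^u_i(u_i-x_i)-\mu^+-\lambda^u_i\Delta x_i\big)}{1+(u_i-x_i)^2}$. Here $[\cdot]$ is 1 if the condition holds and 0 otherwise.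
   Context: General problem: minimize $f(x)$ subject to $l\le x\le u$, $l,u\in\mathbb R^n$, $l<u$, $f$ twice continuously differentiable with locally Lipschitz Hessian; multipliers $\lambda=(\lambda^l,\lambda^u)$. $F_\mu(x,\lambda)=\begin{bmatrix}\nabla f(x)-\lambda^l+\lambda^u\\ \Lambda^l(X-L)e-\mu e\\ \Lambda^u(U-X)e-\mu e\end{bmatrix}$ with $X,L,U,\Lambda^l,\Lambda^u$ the diagonal matrices of $x,l,u,\lambda^l,\lambda^u$ and $e$ all-ones; $F'(x,\lambda)=\begin{bmatrix}\nabla^2f(x)&-I&I\\ \Lambda^l&X-L&0\\ -\Lambda^u&0&U-X\end{bmatrix}$; the Newton direction solves $F'(x,\lambda)(\Delta x^N,\Delta\lambda^{l,N},\Delta\lambda^{u,N})=-F_{\mu^+}(x,\lambda)$. Euclidean norms. Partial approximations: $\Delta x_i^S=-\frac1{d_i}\big([\nabla f(x)]_i-\mu^+[\frac1{x_i-l_i}-\frac1{u_i-x_i}]\big)$ with $d_i=[\nabla^2f(x)]_{ii}+\frac{\lambda^l_i}{x_i-l_i}+\frac{\lambda^u_i}{u_i-x_i}$; $\Delta x^C_i=-(x_i-l_i)+\mu^+/\lambda^l_i$ for $i\in\mathcal A_l$, $\Delta x_i^C=(u_i-x_i)-\mu^+/\lambda^u_i$ for $i\in\mathcal A_u$; $\Delta\lambda^{l,C}_i=-\lambda^l_i+\mu^+/(x_i-l_i)$, $\Delta\lambda^{u,C}_i=-\lambda^u_i+\mu^+/(u_i-x_i)$. Sets: $\mathcal A_l=\{i:x^*_i=l_i\}$,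 $\mathcal A_u=\{i:x^*_i=u_i\}$, $\mathcal I_l,\mathcal I_u$ complements, $\mathcal A_x=\mathcal A_l\cup\mathcal A_u$, $\mathcal I_x$ its complement. Standing hypotheses: $\nabla f(x^* )-\lambda^{l*}+\lambda^{u*}=0$, $l\le x^*\le u$, $\lambda^{l*},\lambda^{u*}\ge0$, $(x^*-l)_i\lambda^{l*}_i=0$, $(u-x^* )_i\lambda^{u*}_i=0$, $(x^*-l)+\lambda^{l*}>0$, $(u-x^* )+\lambda^{u*}>0$, $[\nabla^2f(x^* )]_{\mathcal I_x\mathcal I_x}\succ0$; $\delta>0$ with $F'$ nonsingular and boundedly invertible on $\mathcal B((x^*,\lambda^* ),\delta)$; $\hat\mu>0$ with a Lipschitz barrier trajectory $(x^\mu,\lambda^\mu)\in\mathcal B((x^*,\lambda^* ),\delta)$, $F_\mu(x^\mu,\lambda^\mu)=0$, $\|(x^\mu,\lambda^\mu)-(x^*,\lambda^* )\|\le C_4\mu$ for $\mu\in(0,\hat\mu]$. *)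

(* Defs.v *)
From HB Require Import structures.
From mathcomp Require Import all_boot all_order all_algebra.
From mathcomp Require Import all_classical all_reals all_analysis.
Set Implicit Arguments. Unset Strict Implicit. Unset Printing Implicit Defensive.
Import Order.TTheory GRing.Theory Num.Theory.
Import numFieldNormedType.Exports.
Local Open Scope ring_scope.

Section Defs.
Variable R : realType.

Definition enorm m (v : 'cV[R]_m) : R := Num.sqrt (\sum_(i < m) v i 0 ^+ 2).

(* stacking (x, lambda^l, lambda^u) into one vector of R^{3n} *)
Definition stack3 n (a b c : 'cV[R]_n) : 'cV[R]_(n + n + n) := col_mx (col_mx a b) c.

Definition ei n (i : 'I_n) : 'cV[R]_n := delta_mx i 0.

Definition gradf n (f : 'cV[R]_n -> R) (x : 'cV[R]_n) : 'cV[R]_n :=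
  \col_i derive f x (ei i).
Definition hessf n (f : 'cV[R]_n -> R) (x : 'cV[R]_n) : 'M[R]_n :=
  \matrix_(i, j) derive (fun y => gradf f y i 0) x (ei j).

Definition frob n (A : 'M[R]_n) : R := Num.sqrt (\sum_(i < n) \sum_(j < n) A i j ^+ 2).

(* f is twice continuously differentiable with locally Lipschitz Hessian:
   all first and second partial derivatives exist and the Hessian is
   locally Lipschitz (hence continuous, hence f is C^2). *)
Definition C2_loclipHess n (f : 'cV[R]_n -> R) : Prop :=
  (forall x i, derivable f x (ei i)) /\
  (forall x i j, derivable (fun y => gradf f y i 0) x (ei j)) /\
  (forall x, exists r, 0 < r /\ exists L, forall y z,
      enorm (y - x) < r -> enorm (z - x) < r ->
      frob (hessf f y - hessf f z) <= L * enorm (y - z)).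

Definition Fmu n (f : 'cV[R]_n -> R) (l u : 'cV[R]_n) (mu : R)
    (x ll lu : 'cV[R]_n) : 'cV[R]_(n + n + n) :=
  stack3 (gradf f x - ll + lu)
         (\col_i (ll i 0 * (x i 0 - l i 0) - mu))
         (\col_i (lu i 0 * (u i 0 - x i 0) - mu)).

Definition Fprime n (f : 'cV[R]_n -> R) (l u : 'cV[R]_n)
    (x ll lu : 'cV[R]_n) : 'M[R]_(n + n + n) :=
  block_mx
    (block_mx (hessf f x) (- 1%:M) (diag_mx ll^T) (diag_mx (x - l)^T))
    (col_mx 1%:M 0)
    (row_mx (- diag_mx lu^T) 0)
    (diag_mx (u - x)^T).

Definition newton n (f : 'cV[R]_n -> R) (l u : 'cV[R]_n) (mup : R)
    (x ll lu : 'cV[R]_n) : 'cV[R]_(n + n + n) :=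
  invmx (Fprime f l u x ll lu) *m (- Fmu f l u mup x ll lu).

Definition inAl n (xs l : 'cV[R]_n) (i : 'I_n) : bool := xs i 0 == l i 0.
Definition inAu n (xs u : 'cV[R]_n) (i : 'I_n) : bool := xs i 0 == u i 0.
Definition inAx n (xs l u : 'cV[R]_n) (i : 'I_n) : bool := inAl xs l i || inAu xs u i.

Section Direction.
Variables (n : nat) (g : 'cV[R]_n) (H : 'M[R]_n) (l u xs x ll lu : 'cV[R]_n) (mup : R).

Definition dcoef (i : 'I_n) : R :=
  H i i + ll i 0 / (x i 0 - l i 0) + lu i 0 / (u i 0 - x i 0).

Definition dxS (i : 'I_n) : R :=
  - (dcoef i)^-1 * (g i 0 - mup * ((x i 0 - l i 0)^-1 - (u i 0 - x i 0)^-1)).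

Definition dxC (i : 'I_n) : R :=
  if inAl xs l i then - (x i 0 - l i 0) + mup / ll i 0
  else (u i 0 - x i 0) - mup / lu i 0.

Definition dllC (i : 'I_n) : R := - ll i 0 + mup / (x i 0 - l i 0).
Definition dluC (i : 'I_n) : R := - lu i 0 + mup / (u i 0 - x i 0).

Definition is_dx (cx : 'I_n -> bool) (dx : 'cV[R]_n) : Prop :=
  (forall i, inAx xs l u i -> dx i 0 = if cx i then dxS i else dxC i) /\
  (forall i, ~~ inAx xs l u i ->
     \sum_(j < n | ~~ inAx xs l u j) H i j * dx j 0
       + (ll i 0 / (x i 0 - l i 0) + lu i 0 / (u i 0 - x i 0)) * dx i 0
     = - g i 0 - \sum_(j < n | inAx xs l u j) H i j * dx j 0
       + mup / (x i 0 - l i 0) - mup / (u i 0 - x i 0)).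

Definition dllI (dx : 'cV[R]_n) (i : 'I_n) : R :=
  - ll i 0 + (mup - ll i 0 * dx i 0) / (x i 0 - l i 0).
Definition dluI (dx : 'cV[R]_n) (i : 'I_n) : R :=
  - lu i 0 + (mup + lu i 0 * dx i 0) / (u i 0 - x i 0).

Definition rres (dx : 'cV[R]_n) (i : 'I_n) : R :=
  g i 0 - ll i 0 + lu i 0 + \sum_(j < n) H i j * dx j 0
  - (if ~~ inAl xs l i then dllI dx i else 0)
  + (if ~~ inAu xs u i then dluI dx i else 0).

Definition dllA (dx : 'cV[R]_n) (i : 'I_n) : R :=
  (rres dx i - (x i 0 - l i 0) * (ll i 0 * (x i 0 - l i 0) - mup + ll i 0 * dx i 0))
  / (1 + (x i 0 - l i 0) ^+ 2).
Definition dluA (dx : 'cV[R]_n) (i : 'I_n) : R :=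
  - ((rres dx i + (u i 0 - x i 0) * (lu i 0 * (u i 0 - x i 0) - mup - lu i 0 * dx i 0))
     / (1 + (u i 0 - x i 0) ^+ 2)).

(* Delta lambda^l, Delta lambda^u given the choices:
   cl i / cu i = true selects the "ls" variant; false selects the C variant
   (on I_l / I_u) or the "b" variant (on A_l / A_u). *)
Definition dll (cl : 'I_n -> bool) (dx : 'cV[R]_n) : 'cV[R]_n :=
  \col_i (if inAl xs l i then (if cl i then dllA dx i else rres dx i)
          else (if cl i then dllI dx i else dllC i)).
Definition dlu (cu : 'I_n -> bool) (dx : 'cV[R]_n) : 'cV[R]_n :=
  \col_i (if inAu xs u i then (if cu i then dluA dx i else - rres dx i)
          else (if cu i then dluI dx i else dluC i)).
End Direction.

End Defs.

(* Main.v *)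
Require Import Defs.
From HB Require Import structures.
From mathcomp Require Import all_boot all_order all_algebra.
From mathcomp Require Import all_classical all_reals all_analysis.
From mathcomp Require Import ring lra.
Import Order.TTheory GRing.Theory Num.Theory.
Import numFieldNormedType.Exports.
Set Implicit Arguments. Unset Strict Implicit. Unset Printing Implicit Defensive.
Local Open Scope ring_scope.

Lemma le_sum_abs (R : realType) m (f : 'I_m -> R) (k : 'I_m) :
  `|f k| <= \sum_i `|f i|.
Proof.
rewrite (bigD1 k) //= lerDl; apply: sumr_ge0 => i _; exact: normr_ge0.
Qed.

Lemma sumsq_le (R : realType) m (f : 'I_m -> R) :
  \sum_i f i ^+ 2 <= (\sum_i `|f i|) ^+ 2.
Proof.
rewrite expr2 mulr_suml; apply: ler_sum => i _.
rewrite -[f i ^+ 2]ger0_norm ?sqr_ge0 // expr2 normrM; apply: ler_wpM2l; first exact: normr_ge0.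
exact: le_sum_abs.
Qed.

Lemma enorm_le_sum (R : realType) m (v : 'cV[R]_m) :
  enorm v <= \sum_i `|v i 0|.
Proof.
rewrite /enorm -(ger0_norm (sumr_ge0 _ (fun i _ => normr_ge0 (v i 0)))).
rewrite -sqrtr_sqr ler_sqrt ?exprn_ge0 ?normr_ge0 //.
exact: sumsq_le.
by apply: sumr_ge0 => i _; exact: normr_ge0.
Qed.

Lemma coord_le_enorm (R : realType) m (v : 'cV[R]_m) k :
  `|v k 0| <= enorm v.
Proof.
rewrite /enorm -sqrtr_sqr ler_sqrt; last by apply: sumr_ge0 => i _; exact: sqr_ge0.
rewrite (bigD1 k) //= lerDl; apply: sumr_ge0 => i _; exact: sqr_ge0.
Qed.

Lemma sum_stack3 (R : realType) n (a b c : 'cV[R]_n) (F : R -> R) :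
  \sum_(k < n + n + n) F (stack3 a b c k 0) =
  \sum_i F (a i 0) + \sum_i F (b i 0) + \sum_i F (c i 0).
Proof.
rewrite /stack3 big_split_ord /= big_split_ord /=.
congr (_ + _ + _); apply: eq_bigr => i _; by rewrite ?col_mxEu ?col_mxEd.
Qed.

Lemma stack3E1 (R : realType) n (a b c : 'cV[R]_n) i :
  stack3 a b c (lshift n (lshift n i)) 0 = a i 0.
Proof. by rewrite /stack3 !col_mxEu. Qed.
Lemma stack3E2 (R : realType) n (a b c : 'cV[R]_n) i :
  stack3 a b c (lshift n (rshift n i)) 0 = b i 0.
Proof. by rewrite /stack3 col_mxEu col_mxEd. Qed.
Lemma stack3E3 (R : realType) n (a b c : 'cV[R]_n) i :
  stack3 a b c (rshift (n + n) i) 0 = c i 0.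
Proof. by rewrite /stack3 col_mxEd. Qed.

Lemma stack3_le1 (R : realType) n (a b c : 'cV[R]_n) i : `|a i 0| <= enorm (stack3 a b c).
Proof. rewrite -(stack3E1 a b c); exact: coord_le_enorm. Qed.
Lemma stack3_le2 (R : realType) n (a b c : 'cV[R]_n) i : `|b i 0| <= enorm (stack3 a b c).
Proof. rewrite -(stack3E2 a b c); exact: coord_le_enorm. Qed.
Lemma stack3_le3 (R : realType) n (a b c : 'cV[R]_n) i : `|c i 0| <= enorm (stack3 a b c).
Proof. rewrite -(stack3E3 a b c); exact: coord_le_enorm. Qed.

Lemma enorm_stack3_le (R : realType) n (a b c : 'cV[R]_n) :
  enorm (stack3 a b c) <= \sum_i `|a i 0| + \sum_i `|b i 0| + \sum_i `|c i 0|.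
Proof. rewrite -sum_stack3; exact: enorm_le_sum. Qed.

Lemma stack3B (R : realType) n (a b c a' b' c' : 'cV[R]_n) :
  stack3 a b c - stack3 a' b' c' = stack3 (a - a') (b - b') (c - c').
Proof. by rewrite /stack3 opp_col_mx add_col_mx opp_col_mx add_col_mx. Qed.

Lemma stack3_eq (R : realType) n (v : 'cV[R]_(n + n + n)) :
  v = stack3 (usubmx (usubmx v)) (dsubmx (usubmx v)) (dsubmx v).
Proof. by rewrite /stack3 !vsubmxK. Qed.

Lemma stack3_inj (R : realType) n (a b c a' b' c' : 'cV[R]_n) :
  stack3 a b c = stack3 a' b' c' -> [/\ a = a', b = b' & c = c'].
Proof. by move=> /eq_col_mx [/eq_col_mx [-> ->] ->]. Qed.

Lemma enormN (R : realType) m (v : 'cV[R]_m) : enorm (- v) = enorm v.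
Proof. by rewrite /enorm; congr Num.sqrt; apply: eq_bigr => i _; rewrite mxE sqrrN. Qed.

Lemma entry_le_frob (R : realType) n (A : 'M[R]_n) i j : `|A i j| <= frob A.
Proof.
rewrite /frob -sqrtr_sqr ler_sqrt; last by apply: sumr_ge0 => k _; apply: sumr_ge0 => k' _; exact: sqr_ge0.
rewrite (bigD1 i) //= (bigD1 j) //= -addrA lerDl.
apply: addr_ge0; first by apply: sumr_ge0 => k _; exact: sqr_ge0.
by apply: sumr_ge0 => k _; apply: sumr_ge0 => k' _; exact: sqr_ge0.
Qed.
Lemma Fprime_mul (R : realType) n (f : 'cV[R]_n -> R) (l u x ll lu p q r : 'cV[R]_n) :
  Fprime f l u x ll lu *m stack3 p q r =
  stack3 (hessf f x *m p - q + r)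
    (\col_i (ll i 0 * p i 0 + (x i 0 - l i 0) * q i 0))
    (\col_i (- (lu i 0 * p i 0) + (u i 0 - x i 0) * r i 0)).
Proof.
rewrite /Fprime /stack3 mul_block_col mul_block_col mul_col_mx mul_row_col.
rewrite mul0mx mul1mx mulNmx mul1mx add_col_mx addr0 mul0mx addr0.
congr col_mx; first congr col_mx.
- rewrite !mul_diag_mx; apply/matrixP => i j; rewrite !mxE ord1 /=.
  by [].
- rewrite mulNmx !mul_diag_mx; apply/matrixP => i j; rewrite !mxE ord1 /=.
  by [].
Qed.
Lemma div_bound (R : realType) (p q P e : R) :
  0 < e -> e <= q -> `|p| <= P -> `|p / q| <= P / e.
Proof.
move=> e0 eq pP; have q0 : 0 < q by apply: lt_le_trans eq.
have P0 : 0 <= P by apply: le_trans pP.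
rewrite normrM normfV (gtr0_norm q0).
apply: le_trans (_ : P / q <= _); first by rewrite ler_pM2r ?invr_gt0.
apply: ler_wpM2l => //; rewrite lef_pV2 ?posrE //.
Qed.
Lemma sum_le_n (R : realType) m (F : 'I_m -> R) c :
  (forall i, F i <= c) -> \sum_i F i <= m%:R * c.
Proof.
move=> h; apply: le_trans (ler_sum _ (fun i _ => h i)) _.
by rewrite sumr_const card_ord mulr_natl.
Qed.

Lemma Hmul_bound (R : realType) n (H : 'M[R]_n) (y : 'cV[R]_n) Mh i :
  (forall i j, `|H i j| <= Mh) -> `|(H *m y) i 0| <= Mh * \sum_j `|y j 0|.
Proof.
move=> hH; rewrite mxE; apply: le_trans (ler_norm_sum _ _ _) _.
rewrite mulr_sumr; apply: ler_sum => j _; rewrite normrM.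
by apply: ler_wpM2r => //; exact: normr_ge0.
Qed.

Section Core.
Variables (R : realType) (n : nat) (f : 'cV[R]_n -> R) (l u xs x ll lu : 'cV[R]_n).
Variables (s mu C1 K Mh eta Am : R).
Local Notation H := (hessf f x).
Local Notation a i := (x i 0 - l i 0).
Local Notation b i := (u i 0 - x i 0).
Local Notation Al i := (inAl xs l i).
Local Notation Au i := (inAu xs u i).
Local Notation Ax i := (inAx xs l u i).
Local Notation Fp := (Fprime f l u x ll lu).
Local Notation D i := (ll i 0 / a i + lu i 0 / b i).

Hypothesis hU : Fp \in unitmx.
Hypothesis hK0 : 0 < K.
Hypothesis hK : forall v, enorm (invmx Fp *m v) <= K * enorm v.
Hypothesis hMh : 0 < Mh.
Hypothesis hH : forall i j, `|H i j| <= Mh.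
Hypothesis heta : 0 < eta.
Hypothesis hAm : 0 < Am.
Hypothesis hmu : 0 < mu.
Hypothesis hmu1 : mu <= 1.
Hypothesis hC1 : 0 < C1.
Hypothesis ha : forall i, 0 < a i.
Hypothesis hb : forall i, 0 < b i.
Hypothesis hll : forall i, 0 < ll i 0.
Hypothesis hlu : forall i, 0 < lu i 0.
Hypothesis hcl : forall i, ll i 0 * a i <= (1 + C1) * mu.
Hypothesis hcu : forall i, lu i 0 * b i <= (1 + C1) * mu.
Hypothesis hAl : forall i, Al i -> eta <= ll i 0 /\ a i <= Am * mu.
Hypothesis hIl : forall i, ~~ Al i -> eta <= a i /\ ll i 0 <= Am * mu.
Hypothesis hAu : forall i, Au i -> eta <= lu i 0 /\ b i <= Am * mu.
Hypothesis hIu : forall i, ~~ Au i -> eta <= b i /\ lu i 0 <= Am * mu.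
Hypothesis hexcl : forall i, Al i -> ~~ Au i.
Hypothesis hsmall1 : 4 * n%:R ^+ 2 * K * Am * Mh * mu <= 1.
Hypothesis hsmall2 : 2 * Am * Mh * mu <= eta.

Lemma lin_bound (y : 'cV[R]_n) (h : 'I_n -> R) :
  (forall i, Ax i -> y i 0 = 0) ->
  (forall i, ~~ Ax i -> (H *m y) i 0 + D i * y i 0 = h i) ->
  \sum_i `|y i 0| <= 2 * n%:R * K * \sum_i `|h i|.
Proof.
move=> hy0 hyI.
set T := \sum_i `|y i 0|.
have T0 : 0 <= T by apply: sumr_ge0 => i _; exact: normr_ge0.
pose pl := \col_i (if Al i then (H *m y) i 0 else - (ll i 0 * y i 0 / a i)).
pose pu := \col_i (if Au i then - (H *m y) i 0 else lu i 0 * y i 0 / b i).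
pose w := stack3 y pl pu.
have hw : enorm w <= K * enorm (Fp *m w).
  by rewrite -{1}(mulKmx hU w); exact: hK.
have hHy i : `|(H *m y) i 0| <= Mh * T by exact: Hmul_bound.
have ha0 i : a i != 0 by rewrite gt_eqF.
have hb0 i : b i != 0 by rewrite gt_eqF.
have hFw : enorm (Fp *m w) <= \sum_i `|h i| + n%:R * (Am * mu * (Mh * T))
                              + n%:R * (Am * mu * (Mh * T)).
  rewrite /w Fprime_mul; apply: le_trans (enorm_stack3_le _ _ _) _.
  apply: lerD; first apply: lerD.
  - apply: ler_sum => i _; rewrite !mxE.
    have [hAx|hIx] := boolP (Ax i).
      apply: le_trans (normr_ge0 (h i)); rewrite normr_le0; apply/eqP.
      rewrite hy0 // !mulr0 !mul0r ?oppr0.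
      move: hAx; rewrite /inAx; case/orP => hA.
        by rewrite hA (negPf (hexcl hA)); ring.
      case hA' : (Al i); first by rewrite (negPf (hexcl hA')) in hA.
      by rewrite hA; ring.
    move: (hIx); rewrite /inAx negb_or => /andP [hA1 hA2].
    rewrite (negPf hA1) (negPf hA2) -(hyI i hIx) opprK.
    rewrite [(H *m y) i 0]mxE le_eqVlt; apply/orP; left; apply/eqP; congr `|_|; ring.
  - apply: sum_le_n => i; rewrite !mxE.
    case hA : (Al i).
      rewrite hy0 ?mulr0 ?add0r; last by rewrite /inAx hA.
      rewrite normrM (ger0_norm (ltW (ha i))).
      apply: ler_pM; [exact: ltW|exact: normr_ge0|by case: (hAl hA)|].
      by have := hHy i; rewrite mxE.
    apply: le_trans (_ : _ <= 0) _.
      by rewrite normr_le0; apply/eqP; field; exact: ha0.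
    by apply: mulr_ge0; [apply: mulr_ge0; apply: ltW|apply: mulr_ge0; [apply: ltW|]].
  - apply: sum_le_n => i; rewrite !mxE.
    case hA : (Au i).
      rewrite hy0 ?mulr0 ?oppr0 ?add0r; last by rewrite /inAx hA orbT.
      rewrite mulrN normrN normrM (ger0_norm (ltW (hb i))).
      apply: ler_pM; [exact: ltW|exact: normr_ge0|by case: (hAu hA)|].
      by have := hHy i; rewrite mxE.
    apply: le_trans (_ : _ <= 0) _.
      by rewrite normr_le0; apply/eqP; field; exact: hb0.
    by apply: mulr_ge0; [apply: mulr_ge0; apply: ltW|apply: mulr_ge0; [apply: ltW|]].
have hTw : T <= n%:R * enorm w.
  by apply: sum_le_n => i; exact: stack3_le1.
set S := \sum_i `|h i|.
have S0 : 0 <= S by apply: sumr_ge0 => i _; exact: normr_ge0.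
have key : T <= n%:R * K * S + (2 * n%:R ^+ 2 * K * Am * Mh * mu) * T.
  apply: le_trans hTw _.
  have n0 : 0 <= n%:R :> R by [].
  apply: le_trans (ler_wpM2l n0 (le_trans hw (ler_wpM2l (ltW hK0) hFw))) _.
  rewrite -/S le_eqVlt; apply/orP; left; apply/eqP; ring.
have : (2 * n%:R ^+ 2 * K * Am * Mh * mu) * T <= 2^-1 * T.
  apply: ler_wpM2r => //.
  have -> : 2 * n%:R ^+ 2 * K * Am * Mh * mu = 2^-1 * (4 * n%:R ^+ 2 * K * Am * Mh * mu) by field.
  by rewrite -{2}[2^-1]mulr1 ler_wpM2l // invr_ge0.
lra.
Qed.
Lemma stack3N (a b c : 'cV[R]_n) : - stack3 a b c = stack3 (- a) (- b) (- c).
Proof. by rewrite /stack3 !opp_col_mx. Qed.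

Lemma ratio_lb (p q e A : R) : 0 < e -> 0 < A -> e <= p -> 0 < q -> q <= A -> e / A <= p / q.
Proof.
move=> e0 A0 ep q0 qA; apply: le_trans (_ : e / q <= _).
  by apply: ler_wpM2l; [exact: ltW|rewrite lef_pV2 ?posrE].
by apply: ler_wpM2r => //; rewrite invr_ge0 ltW.
Qed.

Variables (dxN dlN duN : 'cV[R]_n) (B : R).
Local Notation g := (gradf f x).
Hypothesis hN : Fp *m stack3 dxN dlN duN = - Fmu f l u s x ll lu.
Hypothesis hB0 : 0 <= B.
Hypothesis hBx : forall i, `|dxN i 0| <= B * mu.
Hypothesis hBl : forall i, `|dlN i 0| <= B * mu.
Hypothesis hBu : forall i, `|duN i 0| <= B * mu.

Lemma Neqs i :
  [/\ (H *m dxN) i 0 - dlN i 0 + duN i 0 = - (g i 0 - ll i 0 + lu i 0),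
      ll i 0 * dxN i 0 + a i * dlN i 0 = - (ll i 0 * a i - s) &
      - (lu i 0 * dxN i 0) + b i * duN i 0 = - (lu i 0 * b i - s)].
Proof.
move: hN; rewrite Fprime_mul /Fmu stack3N => /stack3_inj [e1 e2 e3]; split.
- by rewrite [(H *m dxN) i 0]mxE; have := congr1 (fun M : 'cV[R]_n => M i 0) e1; rewrite !mxE.
- by have := congr1 (fun M : 'cV[R]_n => M i 0) e2; rewrite !mxE.
- by have := congr1 (fun M : 'cV[R]_n => M i 0) e3; rewrite !mxE.
Qed.

Lemma a0 i : a i != 0. Proof. by rewrite gt_eqF. Qed.
Lemma b0 i : b i != 0. Proof. by rewrite gt_eqF. Qed.
Lemma ll0 i : ll i 0 != 0. Proof. by rewrite gt_eqF. Qed.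
Lemma lu0 i : lu i 0 != 0. Proof. by rewrite gt_eqF. Qed.

Ltac nz := rewrite ?a0 ?b0 ?ll0 ?lu0 ?gt_eqF ?andbT //.

Lemma dlNE i : dlN i 0 = (s - ll i 0 * a i - ll i 0 * dxN i 0) / a i.
Proof.
case: (Neqs i) => _ e2 _; apply: (mulIf (a0 i)); rewrite mulfVK ?a0 //.
by rewrite mulrC; apply/eqP; rewrite -subr_eq0; apply/eqP; move: e2 => /eqP; rewrite -subr_eq0 => /eqP <-; ring.
Qed.

Lemma duNE i : duN i 0 = (s - lu i 0 * b i + lu i 0 * dxN i 0) / b i.
Proof.
case: (Neqs i) => _ _ e3; apply: (mulIf (b0 i)); rewrite mulfVK ?b0 //.
by rewrite mulrC; apply/eqP; rewrite -subr_eq0; apply/eqP; move: e3 => /eqP; rewrite -subr_eq0 => /eqP <-; ring.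
Qed.

Lemma Nred i : (H *m dxN) i 0 + D i * dxN i 0 = - g i 0 + s / a i - s / b i.
Proof.
case: (Neqs i) => e1 _ _.
have -> : (H *m dxN) i 0 = - (g i 0 - ll i 0 + lu i 0) + dlN i 0 - duN i 0.
  by rewrite -e1; ring.
rewrite dlNE duNE; field; apply/andP; split; [exact: b0|exact: a0].
Qed.
Lemma Mh_le : Mh <= eta / (2 * (Am * mu)).
Proof.
have t0 : 0 < 2 * (Am * mu) by rewrite !mulr_gt0.
rewrite ler_pdivlMr //; apply: le_trans hsmall2; rewrite le_eqVlt; apply/orP; left; apply/eqP; ring.
Qed.

Lemma dcoef_lb i : Ax i -> eta / (2 * (Am * mu)) <= dcoef H l u x ll lu i.
Proof.
move=> hA; rewrite /dcoef.
have t0 : 0 < Am * mu by rewrite mulr_gt0.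
have hHii : - Mh <= H i i by have := hH i i; rewrite ler_norml => /andP [].
have hlq : 0 <= ll i 0 / a i by rewrite divr_ge0 // ltW.
have huq : 0 <= lu i 0 / b i by rewrite divr_ge0 // ltW.
have key : eta / (Am * mu) <= ll i 0 / a i + lu i 0 / b i.
  move: hA; rewrite /inAx; case/orP => hA.
    case: (hAl hA) => h1 h2.
    by apply: le_trans (ratio_lb heta t0 h1 (ha i) h2) _; rewrite lerDl.
  case: (hAu hA) => h1 h2.
  by apply: le_trans (ratio_lb heta t0 h1 (hb i) h2) _; rewrite lerDr.
have e2 : eta / (Am * mu) = 2 * (eta / (2 * (Am * mu))).
  by field; nz.
have := Mh_le; lra.
Qed.

Definition E1c := 2 * (n%:R + 1) * Mh * B * Am / eta + Am * B / eta.

Lemma E1c_ge0 : 0 <= 2 * (n%:R + 1) * Mh * B * Am / eta /\ 0 <= Am * B / eta.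
Proof.
have n0 : 0 <= n%:R + 1 :> R by apply: addr_ge0.
split; (apply: divr_ge0; last exact: ltW); repeat apply: mulr_ge0 => //; exact: ltW.
Qed.

Lemma sumB_le : \sum_j `|dxN j 0| <= n%:R * (B * mu).
Proof. by apply: sum_le_n. Qed.

Lemma Abound cx dx : is_dx g H l u xs x ll lu s cx dx ->
  forall i, Ax i -> `|dx i 0 - dxN i 0| <= E1c * mu ^+ 2.
Proof.
case=> hA _ i hAi; rewrite (hA i hAi).
have t0 : 0 < Am * mu by rewrite mulr_gt0.
have [P1 P2] := E1c_ge0.
case: (cx i).
  have dlb := dcoef_lb hAi.
  have e0 : 0 < eta / (2 * (Am * mu)) by rewrite divr_gt0 // mulr_gt0.
  have d0 : dcoef H l u x ll lu i != 0 by rewrite gt_eqF // (lt_le_trans e0).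
  have -> : dxS g H l u x ll lu s i - dxN i 0 =
            ((H *m dxN) i 0 - H i i * dxN i 0) / dcoef H l u x ll lu i.
    rewrite /dxS; apply: (mulIf d0); rewrite mulfVK //.
    have := Nred i; rewrite /dcoef => E.
    have -> : (H *m dxN) i 0 = - g i 0 + s / a i - s / b i - D i * dxN i 0 by rewrite -E; ring.
    have d0' : (H i i * a i + ll i 0) * b i + lu i 0 * a i != 0.
      have -> : (H i i * a i + ll i 0) * b i + lu i 0 * a i = dcoef H l u x ll lu i * a i * b i.
        by rewrite /dcoef; field; nz.
      by rewrite !mulf_neq0 // ?a0 ?b0.
    by field; rewrite d0'; nz.
  have num : `|(H *m dxN) i 0 - H i i * dxN i 0| <= (n%:R + 1) * Mh * B * mu.
    apply: le_trans (ler_normB _ _) _.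
    have h1 := Hmul_bound dxN i hH.
    have h2 : `|H i i * dxN i 0| <= Mh * (B * mu).
      by rewrite normrM; apply: ler_pM => //; exact: normr_ge0.
    have h3 : Mh * \sum_j `|dxN j 0| <= Mh * (n%:R * (B * mu)).
      by apply: ler_wpM2l; [exact: ltW|exact: sumB_le].
    have -> : (n%:R + 1) * Mh * B * mu = Mh * (n%:R * (B * mu)) + Mh * (B * mu) by ring.
    lra.
  apply: le_trans (div_bound e0 dlb num) _.
  have -> : (n%:R + 1) * Mh * B * mu / (eta / (2 * (Am * mu))) =
            2 * (n%:R + 1) * Mh * B * Am / eta * mu ^+ 2.
    by field; nz.
  by rewrite /E1c [(_ + Am * B / eta) * _]mulrDl lerDl mulr_ge0 // sqr_ge0.
rewrite /dxC.
have hb2 : Am * mu * (B * mu) / eta <= E1c * mu ^+ 2.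
  have -> : Am * mu * (B * mu) / eta = Am * B / eta * mu ^+ 2 by field; nz.
  by rewrite /E1c [(_ + Am * B / eta) * _]mulrDl lerDr mulr_ge0 // sqr_ge0.
case hA1 : (Al i).
  case: (hAl hA1) => h1 h2.
  have -> : - a i + s / ll i 0 - dxN i 0 = a i * dlN i 0 / ll i 0.
    rewrite dlNE; field; nz.
  apply: le_trans hb2; apply: div_bound => //.
  rewrite normrM (gtr0_norm (ha i)); apply: ler_pM => //; exact: ltW.
have hA2 : Au i by move: hAi; rewrite /inAx hA1.
case: (hAu hA2) => h1 h2.
have -> : b i - s / lu i 0 - dxN i 0 = - (b i * duN i 0) / lu i 0.
  rewrite duNE; field; nz.
apply: le_trans hb2; apply: div_bound => //.
rewrite normrN normrM (gtr0_norm (hb i)); apply: ler_pM => //; exact: ltW.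
Qed.
Lemma split_sum (F : 'I_n -> R) :
  \sum_j F j = \sum_(j | Ax j) F j + \sum_(j | ~~ Ax j) F j.
Proof. by rewrite (bigID (fun j => Ax j)) /=. Qed.

Lemma is_dx_full cx dx : is_dx g H l u xs x ll lu s cx dx ->
  forall i, ~~ Ax i -> (H *m dx) i 0 + D i * dx i 0 = - g i 0 + s / a i - s / b i.
Proof.
case=> _ hI i hi; have E := hI i hi; rewrite [(H *m dx) i 0]mxE split_sum.
lra.
Qed.

Lemma is_dx_of_full cx (dx : 'cV[R]_n) :
  (forall i, Ax i -> dx i 0 = if cx i then dxS g H l u x ll lu s i else dxC l u xs x ll lu s i) ->
  (forall i, ~~ Ax i -> (H *m dx) i 0 + D i * dx i 0 = - g i 0 + s / a i - s / b i) ->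
  is_dx g H l u xs x ll lu s cx dx.
Proof.
move=> hA hI; split => // i hi; have := hI i hi; rewrite [(H *m dx) i 0]mxE split_sum => E.
lra.
Qed.

Definition E2c := 2 * n%:R * K * (n%:R * (Mh * (n%:R * E1c))).
Definition Ecc := E1c + E2c.

Lemma E1c_ge0' : 0 <= E1c.
Proof. by have [P1 P2] := E1c_ge0; rewrite /E1c addr_ge0. Qed.

Lemma E2c_ge0 : 0 <= E2c.
Proof.
rewrite /E2c; have := E1c_ge0'; move=> h.
repeat apply: mulr_ge0 => //; exact: ltW.
Qed.

Lemma Allbound cx dx : is_dx g H l u xs x ll lu s cx dx ->
  forall i, `|dx i 0 - dxN i 0| <= Ecc * mu ^+ 2.
Proof.
move=> hdx.
have hA := Abound hdx.
have hE1 := E1c_ge0'; have hE2 := E2c_ge0.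
have m2 : 0 <= mu ^+ 2 by exact: sqr_ge0.
pose e := dx - dxN.
pose y := \col_i (if Ax i then 0 else e i 0).
pose z := e - y.
have hz i : `|z i 0| <= E1c * mu ^+ 2.
  rewrite !mxE; case: ifP => hi; first by rewrite subr0; exact: hA.
  by rewrite subrr normr0 mulr_ge0.
have hy0 i : Ax i -> y i 0 = 0 by rewrite mxE => ->.
have hyI i : ~~ Ax i -> (H *m y) i 0 + D i * y i 0 = - (H *m z) i 0.
  move=> hi.
  have ey : y = e - z by rewrite /z opprB addrC subrK.
  have fe := is_dx_full hdx hi; have fN := Nred i.
  rewrite ey mulmxBr !mxE (negPf hi).
  rewrite /e !mxE in fe fN *.
  rewrite (eq_bigr (fun j => H i j * dx j 0 - H i j * dxN j 0)); last first.
    by move=> j _; rewrite !mxE; ring.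
  rewrite sumrB; lra.
have hly := lin_bound hy0 hyI.
have hsz : \sum_j `|z j 0| <= n%:R * (E1c * mu ^+ 2) by apply: sum_le_n.
have hh : \sum_i `|- (H *m z) i 0| <= n%:R * (Mh * (n%:R * (E1c * mu ^+ 2))).
  apply: sum_le_n => i; rewrite normrN; apply: le_trans (Hmul_bound z i hH) _.
  by apply: ler_wpM2l => //; exact: ltW.
have hsy : \sum_i `|y i 0| <= E2c * mu ^+ 2.
  apply: le_trans hly _.
  have -> : E2c * mu ^+ 2 = 2 * n%:R * K * (n%:R * (Mh * (n%:R * (E1c * mu ^+ 2)))).
    by rewrite /E2c; ring.
  apply: ler_wpM2l => //; repeat apply: mulr_ge0 => //; exact: ltW.
move=> i; case: (boolP (Ax i)) => hi.
  by apply: le_trans (hA i hi) _; rewrite /Ecc ler_wpM2r // lerDl.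
have -> : dx i 0 - dxN i 0 = y i 0 by rewrite !mxE (negPf hi).
apply: le_trans (le_trans (le_sum_abs (fun j => y j 0) i) hsy) _.
by rewrite /Ecc ler_wpM2r // lerDr.
Qed.
Lemma mxBE m p (M1 M2 : 'M[R]_(m, p)) i j : (M1 - M2) i j = M1 i j - M2 i j.
Proof. by rewrite !mxE. Qed.

Lemma dx_unique cx dx1 dx2 :
  is_dx g H l u xs x ll lu s cx dx1 -> is_dx g H l u xs x ll lu s cx dx2 -> dx1 = dx2.
Proof.
move=> h1 h2; have [hA1 _] := h1; have [hA2 _] := h2.
pose y := dx1 - dx2.
have hy0 i : Ax i -> y i 0 = 0 by move=> hi; rewrite !mxE hA1 // hA2 // subrr.
have hyI i : ~~ Ax i -> (H *m y) i 0 + D i * y i 0 = (fun _ => 0) i.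
  move=> hi; have f1 := is_dx_full h1 hi; have f2 := is_dx_full h2 hi.
  rewrite /y mulmxBr !mxBE; lra.
have := lin_bound hy0 hyI; rewrite [X in _ <= _ * X]big1 ?mulr0 => [hs|i _]; last by rewrite normr0.
apply/matrixP => i j; rewrite ord1; apply/eqP; rewrite -subr_eq0; apply/eqP.
have : `|y i 0| <= 0 by apply: le_trans (le_sum_abs (fun j => y j 0) i) hs.
by rewrite normr_le0 !mxE => /eqP.
Qed.

Lemma sum_delta (F : 'I_n -> R) i : \sum_j (i == j)%:R * F j = F i.
Proof.
rewrite (bigD1 i) //= eqxx mul1r big1 ?addr0 // => j hj.
by rewrite eq_sym (negPf hj) mul0r.
Qed.

Lemma dx_exists cx : exists dx, is_dx g H l u xs x ll lu s cx dx.
Proof.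
pose N : 'M[R]_n := \matrix_(i, j) (if Ax i then (i == j)%:R else H i j + (i == j)%:R * D i).
pose rhs : 'cV[R]_n := \col_i (if Ax i then (if cx i then dxS g H l u x ll lu s i
                                                  else dxC l u xs x ll lu s i)
                                else - g i 0 + s / a i - s / b i).
have NE (v : 'cV[R]_n) i : (N *m v) i 0 =
    if Ax i then v i 0 else (H *m v) i 0 + D i * v i 0.
  rewrite mxE; case: (boolP (Ax i)) => hi.
    under eq_bigr => j _ do rewrite mxE hi.
    exact: sum_delta.
  under eq_bigr => j _ do rewrite mxE (negPf hi) mulrDl.
  rewrite big_split /= [(H *m v) i 0]mxE; congr (_ + _).
  under eq_bigr => j _ do rewrite mulrAC.
  by rewrite -mulr_suml sum_delta mulrC.
have NU : N \in unitmx.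
  rewrite -unitmx_tr -row_free_unit; apply: inj_row_free => v hv.
  have hv' : N *m v^T = 0.
    by rewrite -[N *m _]trmxK trmx_mul trmxK hv; apply/matrixP => i j; rewrite !mxE.
  pose y := v^T.
  have hy0 i : Ax i -> y i 0 = 0.
    move=> hi; have E := congr1 (fun M : 'cV[R]_n => M i 0) hv'; rewrite /= NE hi in E.
    by apply: etrans E _; rewrite mxE.
  have hyI i : ~~ Ax i -> (H *m y) i 0 + D i * y i 0 = (fun _ => 0) i.
    move=> hi; have E := congr1 (fun M : 'cV[R]_n => M i 0) hv'; rewrite /= NE (negPf hi) in E.
    by apply: etrans E _; rewrite mxE.
  have := lin_bound hy0 hyI; rewrite [X in _ <= _ * X]big1 ?mulr0 => [hs|i _]; last by rewrite normr0.
  apply/matrixP => i j; rewrite ord1 mxE.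
  have : `|y j 0| <= 0 by apply: le_trans (le_sum_abs (fun j => y j 0) j) hs.
  by rewrite normr_le0 mxE => /eqP.
exists (invmx N *m rhs).
have hNd : N *m (invmx N *m rhs) = rhs by rewrite mulKVmx.
apply: is_dx_of_full => i hi.
  have E := congr1 (fun M : 'cV[R]_n => M i 0) hNd; rewrite /= NE hi in E.
  by apply: etrans E _; rewrite mxE hi.
have E := congr1 (fun M : 'cV[R]_n => M i 0) hNd; rewrite /= NE (negPf hi) in E.
by apply: etrans E _; rewrite mxE (negPf hi).
Qed.
Lemma mu_le (X : R) : 0 <= X -> mu * X <= X.
Proof. by move=> X0; rewrite ler_piMl. Qed.

Lemma bnd1 (p q P : R) : eta <= q -> `|p| <= Am * mu * P -> 0 <= P -> `|p / q| <= Am / eta * P.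
Proof.
move=> hq hp P0; apply: le_trans (div_bound heta hq hp) _.
have -> : Am * mu * P / eta = mu * (Am / eta * P) by field; nz.
apply: mu_le; apply: mulr_ge0 => //; apply: divr_ge0; exact: ltW.
Qed.

Lemma prod_bnd (c d C0 Dd : R) : 0 <= c -> c <= C0 -> `|d| <= Dd -> `|c * d| <= C0 * Dd.
Proof.
move=> c0 cC dD; rewrite normrM (ger0_norm c0); apply: ler_pM => //; exact: normr_ge0.
Qed.

Definition Gc := Mh * n%:R * Ecc + Am / eta * Ecc + (1 + C1) * Ecc + Am * B / eta.

Lemma Gc_parts : [/\ 0 <= Mh * n%:R * Ecc, 0 <= Am / eta * Ecc, 0 <= (1 + C1) * Ecc
   & 0 <= Am * B / eta].
Proof.
have hE : 0 <= Ecc by rewrite /Ecc addr_ge0 // ?E1c_ge0' ?E2c_ge0.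
have ae : 0 <= Am / eta by rewrite divr_ge0 // ltW.
have c0 : 0 <= 1 + C1 by rewrite addr_ge0 // ltW.
have n0 : 0 <= n%:R :> R by [].
split; first by rewrite !mulr_ge0 // ltW.
- by rewrite mulr_ge0.
- by rewrite mulr_ge0.
- by rewrite divr_ge0 ?mulr_ge0 // ltW.
Qed.

Lemma lam_bounds cx cl cu dx : is_dx g H l u xs x ll lu s cx dx ->
  forall i, `|dll g H l u xs x ll lu s cl dx i 0 - dlN i 0| <= Gc * mu ^+ 2 /\
            `|dlu g H l u xs x ll lu s cu dx i 0 - duN i 0| <= Gc * mu ^+ 2.
Proof.
move=> hdx i.
have hE := Allbound hdx.
have hE0 : 0 <= Ecc by rewrite /Ecc addr_ge0 // ?E1c_ge0' ?E2c_ge0.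
have m2 : 0 <= mu ^+ 2 by exact: sqr_ge0.
have EM0 : 0 <= Ecc * mu ^+ 2 by rewrite mulr_ge0.
have [G1 G2 G3 G4] := Gc_parts.
have hSHe : `|\sum_j H i j * dx j 0 - \sum_j H i j * dxN j 0| <= Mh * n%:R * Ecc * mu ^+ 2.
  have -> : \sum_j H i j * dx j 0 - \sum_j H i j * dxN j 0 = (H *m (dx - dxN)) i 0.
    by rewrite mulmxBr mxBE !mxE.
  apply: le_trans (Hmul_bound _ i hH) _.
  have -> : Mh * n%:R * Ecc * mu ^+ 2 = Mh * (n%:R * (Ecc * mu ^+ 2)) by ring.
  by apply: ler_wpM2l; [exact: ltW|apply: sum_le_n => j; rewrite mxBE; exact: hE].
have hgl : `|ll i 0 * dxN i 0 / a i| <= Am * B / eta * mu ^+ 2 /\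
           `|ll i 0 * (dx i 0 - dxN i 0) / a i| <= Am / eta * Ecc * mu ^+ 2 ->
           True by [].
have hBm : 0 <= B * mu by rewrite mulr_ge0 // ltW.
split.
  rewrite mxE.
  case hA1 : (Al i).
    have hA2 := hexcl hA1.
    have hr : `|rres g H l u xs x ll lu s dx i - dlN i 0| <= (Mh * n%:R * Ecc + Am / eta * Ecc) * mu ^+ 2.
      rewrite /rres hA1 (negPf hA2) /= subr0.
      have -> : g i 0 - ll i 0 + lu i 0 + \sum_j H i j * dx j 0 + dluI u x lu s dx i - dlN i 0
             = (\sum_j H i j * dx j 0 - \sum_j H i j * dxN j 0) + lu i 0 * (dx i 0 - dxN i 0) / b i.
        case: (Neqs i) => e1 _ _.
        have -> : dlN i 0 = (H *m dxN) i 0 + duN i 0 + (g i 0 - ll i 0 + lu i 0) by rewrite -[LHS]opprK -[- dlN i 0](subrK ((H *m dxN) i 0)); lra.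
        rewrite duNE /dluI [(H *m dxN) i 0]mxE; field; nz.
      rewrite mulrDl; apply: le_trans (ler_normD _ _) _; apply: lerD => //.
      have := hIu hA2 => -[hb1 hb2].
      rewrite -[Am / eta * Ecc * mu ^+ 2]mulrA; apply: bnd1 => //.
      by apply: prod_bnd => //; exact: ltW.
    case: (cl i) => //.
      rewrite /dllA; set r := rres g H l u xs x ll lu s dx i.
      have q1 : 1 <= 1 + a i ^+ 2 by rewrite lerDl sqr_ge0.
      have q0 : 1 + a i ^+ 2 != 0 by rewrite gt_eqF // (lt_le_trans ltr01 q1).
      have -> : (r - a i * (ll i 0 * a i - s + ll i 0 * dx i 0)) / (1 + a i ^+ 2) - dlN i 0
             = (r - dlN i 0 - a i * ll i 0 * (dx i 0 - dxN i 0)) / (1 + a i ^+ 2).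
        rewrite dlNE; field; rewrite q0; nz.
      have hae : `|a i * ll i 0 * (dx i 0 - dxN i 0)| <= (1 + C1) * mu * (Ecc * mu ^+ 2).
        apply: prod_bnd; [by rewrite mulr_ge0 // ltW|by rewrite mulrC|exact: hE].
      have hnum := le_trans (ler_normB _ _) (lerD hr hae).
      apply: le_trans (div_bound ltr01 q1 hnum) _; rewrite divr1.
      have : (1 + C1) * mu * (Ecc * mu ^+ 2) <= (1 + C1) * Ecc * mu ^+ 2.
        rewrite -mulrA mulrCA -[X in _ <= X]mulrA; apply: mu_le; by rewrite mulr_ge0 // addr_ge0 // ltW.
      move=> h; apply: le_trans (lerD (lexx _) h) _.
      by rewrite -mulrDl; apply: ler_wpM2r => //; rewrite /Gc; lra.
    apply: le_trans hr _; apply: ler_wpM2r => //; rewrite /Gc; lra.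
  have := hIl (negbT hA1) => -[ha1 ha2].
  case: (cl i).
    have -> : dllI l x ll s dx i - dlN i 0 = - (ll i 0 * (dx i 0 - dxN i 0)) / a i.
      rewrite /dllI dlNE; field; nz.
    have h := bnd1 ha1 (prod_bnd (ltW (hll i)) ha2 (hE i)) EM0.
    rewrite mulNr normrN; apply: le_trans h _.
    rewrite mulrA; apply: ler_wpM2r => //; rewrite /Gc; lra.
  have -> : dllC l x ll s i - dlN i 0 = ll i 0 * dxN i 0 / a i.
    rewrite /dllC dlNE; field; nz.
  apply: le_trans (div_bound heta ha1 (prod_bnd (ltW (hll i)) ha2 (hBx i))) _.
  have -> : Am * mu * (B * mu) / eta = Am * B / eta * mu ^+ 2 by field; nz.
  apply: ler_wpM2r => //; rewrite /Gc; lra.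
rewrite mxE.
case hA2 : (Au i).
  have hA1 : ~~ Al i by apply/negP => /hexcl; rewrite hA2.
  have := hIl hA1 => -[ha1 ha2].
  have hr : `|- rres g H l u xs x ll lu s dx i - duN i 0| <= (Mh * n%:R * Ecc + Am / eta * Ecc) * mu ^+ 2.
    rewrite /rres hA1 hA2 /= addr0.
    have -> : - (g i 0 - ll i 0 + lu i 0 + \sum_j H i j * dx j 0 - dllI l x ll s dx i) - duN i 0
           = - (\sum_j H i j * dx j 0 - \sum_j H i j * dxN j 0) - ll i 0 * (dx i 0 - dxN i 0) / a i.
      case: (Neqs i) => e1 _ _.
      have -> : duN i 0 = - (H *m dxN) i 0 + dlN i 0 - (g i 0 - ll i 0 + lu i 0) by lra.
      rewrite dlNE /dllI [(H *m dxN) i 0]mxE; field; nz.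
    rewrite mulrDl; apply: le_trans (ler_normB _ _) _; apply: lerD; first by rewrite normrN.
    rewrite -[Am / eta * Ecc * mu ^+ 2]mulrA; apply: bnd1 => //.
    by apply: prod_bnd => //; exact: ltW.
  case: (cu i) => //.
    rewrite /dluA; set r := rres g H l u xs x ll lu s dx i.
    have q1 : 1 <= 1 + b i ^+ 2 by rewrite lerDl sqr_ge0.
    have q0 : 1 + b i ^+ 2 != 0 by rewrite gt_eqF // (lt_le_trans ltr01 q1).
    have -> : - ((r + b i * (lu i 0 * b i - s - lu i 0 * dx i 0)) / (1 + b i ^+ 2)) - duN i 0
           = (- r - duN i 0 + b i * lu i 0 * (dx i 0 - dxN i 0)) / (1 + b i ^+ 2).
      rewrite duNE; field; rewrite q0; nz.
    have hae : `|b i * lu i 0 * (dx i 0 - dxN i 0)| <= (1 + C1) * mu * (Ecc * mu ^+ 2).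
      apply: prod_bnd; [by rewrite mulr_ge0 // ltW|by rewrite mulrC|exact: hE].
    have hnum := le_trans (ler_normD _ _) (lerD hr hae).
    apply: le_trans (div_bound ltr01 q1 hnum) _; rewrite divr1.
    have : (1 + C1) * mu * (Ecc * mu ^+ 2) <= (1 + C1) * Ecc * mu ^+ 2.
      rewrite -mulrA mulrCA -[X in _ <= X]mulrA; apply: mu_le; by rewrite mulr_ge0 // addr_ge0 // ltW.
    move=> h; apply: le_trans (lerD (lexx _) h) _.
    by rewrite -mulrDl; apply: ler_wpM2r => //; rewrite /Gc; lra.
  apply: le_trans hr _; apply: ler_wpM2r => //; rewrite /Gc; lra.
have := hIu (negbT hA2) => -[hb1 hb2].
case: (cu i).
  have -> : dluI u x lu s dx i - duN i 0 = lu i 0 * (dx i 0 - dxN i 0) / b i.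
    rewrite /dluI duNE; field; nz.
  apply: le_trans (bnd1 hb1 (prod_bnd (ltW (hlu i)) hb2 (hE i)) EM0) _.
  rewrite mulrA; apply: ler_wpM2r => //; rewrite /Gc; lra.
have -> : dluC u x lu s i - duN i 0 = - (lu i 0 * dxN i 0) / b i.
  rewrite /dluC duNE; field; nz.
have h := div_bound heta hb1 (prod_bnd (ltW (hlu i)) hb2 (hBx i)).
rewrite mulNr normrN; apply: le_trans h _.
have -> : Am * mu * (B * mu) / eta = Am * B / eta * mu ^+ 2 by field; nz.
apply: ler_wpM2r => //; rewrite /Gc; lra.
Qed.
Definition Cc := n%:R * Ecc + n%:R * Gc + n%:R * Gc.

Lemma final_est cx cl cu dx : is_dx g H l u xs x ll lu s cx dx ->
  enorm (stack3 dx (dll g H l u xs x ll lu s cl dx) (dlu g H l u xs x ll lu s cu dx)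
         - stack3 dxN dlN duN) <= Cc * mu ^+ 2.
Proof.
move=> hdx; rewrite stack3B; apply: le_trans (enorm_stack3_le _ _ _) _.
have hl := lam_bounds cl cu hdx.
rewrite /Cc !mulrDl -!mulrA; apply: lerD; first apply: lerD.
- apply: sum_le_n => i; rewrite mxBE; exact: Allbound hdx i.
- apply: sum_le_n => i; rewrite mxBE; exact: (hl i).1.
- apply: sum_le_n => i; rewrite mxBE; exact: (hl i).2.
Qed.

Lemma dcoef_nz i : Ax i -> dcoef H l u x ll lu i != 0.
Proof.
move=> hA; have e0 : 0 < eta / (2 * (Am * mu)) by rewrite divr_gt0 // !mulr_gt0.
by rewrite gt_eqF // (lt_le_trans e0 (dcoef_lb hA)).
Qed.

End Core.
Lemma pos_lb (R : realType) n (F : 'I_n -> R) :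
  (forall i, 0 < F i) -> exists e, 0 < e /\ forall i, e <= F i.
Proof.
move=> hF.
have S0 : 0 <= \sum_i (F i)^-1 by apply: sumr_ge0 => i _; rewrite invr_ge0 ltW.
have p0 : 0 < 1 + \sum_i (F i)^-1 by rewrite ltr_pwDl.
exists (1 + \sum_i (F i)^-1)^-1; split; first by rewrite invr_gt0.
move=> i; rewrite -[F i]invrK lef_pV2 ?posrE ?invr_gt0 //.
apply: le_trans (_ : \sum_j (F j)^-1 <= _); last by rewrite lerDr.
rewrite (bigD1 i) //= lerDl; apply: sumr_ge0 => j _; by rewrite invr_ge0 ltW.
Qed.

Lemma close3 (R : realType) n (a b c a' b' c' a'' b'' c'' : 'cV[R]_n) r1 r2 i :
  enorm (stack3 a b c - stack3 a' b' c') < r1 ->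
  enorm (stack3 a' b' c' - stack3 a'' b'' c'') <= r2 ->
  [/\ `|a i 0 - a'' i 0| < r1 + r2, `|b i 0 - b'' i 0| < r1 + r2 &
      `|c i 0 - c'' i 0| < r1 + r2].
Proof.
rewrite !stack3B => h1 h2.
have t (p q r : R) : `|p - q| < r1 -> `|q - r| <= r2 -> `|p - r| < r1 + r2.
  move=> hpq hqr; have -> : p - r = (p - q) + (q - r) by ring.
  have := ler_normD (p - q) (q - r); lra.
split; apply: t.
- by have := stack3_le1 (a - a') (b - b') (c - c') i; rewrite mxBE => /le_lt_trans; apply.
- by have := stack3_le1 (a' - a'') (b' - b'') (c' - c'') i; rewrite mxBE => /le_trans; apply.
- by have := stack3_le2 (a - a') (b - b') (c - c') i; rewrite mxBE => /le_lt_trans; apply.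
- by have := stack3_le2 (a' - a'') (b' - b'') (c' - c'') i; rewrite mxBE => /le_trans; apply.
- by have := stack3_le3 (a - a') (b - b') (c - c') i; rewrite mxBE => /le_lt_trans; apply.
- by have := stack3_le3 (a' - a'') (b' - b'') (c' - c'') i; rewrite mxBE => /le_trans; apply.
Qed.

Lemma enorm_ge0 (R : realType) m (v : 'cV[R]_m) : 0 <= enorm v.
Proof. exact: sqrtr_ge0. Qed.

Lemma enorm0 (R : realType) m : enorm (0 : 'cV[R]_m) = 0.
Proof. by rewrite /enorm big1 ?sqrtr0 // => i _; rewrite mxE expr0n. Qed.

Lemma act_facts (R : realType) (lam a lam_s a_s m c1 eta e' : R) :
  0 < a -> 0 < lam -> 0 < eta -> e' <= eta -> 2 * eta <= a_s + lam_s ->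
  a_s * lam_s = 0 -> `|a - a_s| < e' -> `|lam - lam_s| < e' ->
  lam * a <= (1 + c1) * m ->
  (a_s = 0 -> eta <= lam /\ a <= (1 + c1) / eta * m) /\
  (a_s != 0 -> eta <= a /\ lam <= (1 + c1) / eta * m).
Proof.
move=> a0 l0 e0 ee hs hc ha hl hp.
move: ha hl; rewrite !ltr_norml => /andP [ha1 ha2] /andP [hl1 hl2].
have key (p q : R) : 0 < p -> eta <= q -> q * p <= (1 + c1) * m -> p <= (1 + c1) / eta * m.
  move=> p0 hq hqp; rewrite mulrAC ler_pdivlMr //.
  by apply: le_trans hqp; rewrite mulrC ler_wpM2r // ltW.
split => has.
  have hle : eta <= lam by move: has hs hl1 ee; clear; lra.
  by split => //; exact: key a0 hle hp.
have ls0 : lam_s = 0 by move/eqP: hc; rewrite mulf_eq0 (negPf has) /= => /eqP.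
have hae : eta <= a by move: ls0 hs ha1 ee; clear; lra.
split => //; apply: key l0 hae _; by rewrite mulrC.
Qed.

Lemma lerBaux (R : realType) (p m q : R) : p - m <= q -> p <= m + q.
Proof. lra. Qed.

Unset Implicit Arguments.

Theorem mainTheorem11 (R : realType) (n : nat) (f : 'cV[R]_n -> R)
  (l u xs lls lus : 'cV[R]_n) (delta muhat C4 : R)
  (xmu llmu lumu : R -> 'cV[R]_n) (sigma C1 : R) :
  C2_loclipHess f ->
  (forall i, l i 0 < u i 0) ->
  (* KKT conditions and strict complementarity at (xs, lambda_s) *)
  gradf f xs - lls + lus = 0 ->
  (forall i, l i 0 <= xs i 0 <= u i 0) ->
  (forall i, 0 <= lls i 0) -> (forall i, 0 <= lus i 0) ->
  (forall i, (xs i 0 - l i 0) * lls i 0 = 0) ->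
  (forall i, (u i 0 - xs i 0) * lus i 0 = 0) ->
  (forall i, 0 < (xs i 0 - l i 0) + lls i 0) ->
  (forall i, 0 < (u i 0 - xs i 0) + lus i 0) ->
  (* [Hess f(xs)]_{I_x I_x} positive definite *)
  (forall v : 'cV[R]_n, v != 0 -> (forall i, inAx xs l u i -> v i 0 = 0) ->
     0 < (v^T *m hessf f xs *m v) 0 0) ->
  (* F' nonsingular and boundedly invertible on the ball of radius delta around (xs, lls, lus) *)
  0 < delta ->
  (exists K, forall x ll lu,
     enorm (stack3 x ll lu - stack3 xs lls lus) < delta ->
     Fprime f l u x ll lu \in unitmx /\
     forall v, enorm (invmx (Fprime f l u x ll lu) *m v) <= K * enorm v) ->
  (* Lipschitz barrier trajectory *)
  0 < muhat ->
  (exists L, forall m1 m2, 0 < m1 <= muhat -> 0 < m2 <= muhat ->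
     enorm (stack3 (xmu m1) (llmu m1) (lumu m1) - stack3 (xmu m2) (llmu m2) (lumu m2))
       <= L * `|m1 - m2|) ->
  (forall mu, 0 < mu <= muhat ->
     enorm (stack3 (xmu mu) (llmu mu) (lumu mu) - stack3 xs lls lus) < delta /\
     Fmu f l u mu (xmu mu) (llmu mu) (lumu mu) = 0 /\
     enorm (stack3 (xmu mu) (llmu mu) (lumu mu) - stack3 xs lls lus) <= C4 * mu) ->
  0 < sigma < 1 -> 0 < C1 ->
  exists rho mubar C : R, 0 < rho /\ 0 < mubar <= muhat /\ 0 < C /\
  forall (mu : R) (x ll lu : 'cV[R]_n),
    0 < mu <= mubar ->
    enorm (stack3 x ll lu - stack3 xs lls lus) < delta ->
    (forall i, l i 0 < x i 0 < u i 0) ->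
    (forall i, 0 < ll i 0) -> (forall i, 0 < lu i 0) ->
    enorm (stack3 x ll lu - stack3 (xmu mu) (llmu mu) (lumu mu)) < rho ->
    enorm (Fmu f l u mu x ll lu) <= C1 * mu ->
    forall cx cl cu : 'I_n -> bool,
      (* well-definedness: Delta x^S is defined where chosen, and the linear system
         of step (ii) has a unique solution *)
      (forall i, inAx xs l u i -> cx i ->
         dcoef (hessf f x) l u x ll lu i != 0) /\
      (exists! dx : 'cV[R]_n,
         is_dx (gradf f x) (hessf f x) l u xs x ll lu (sigma * mu) cx dx) /\
      (* the estimate *)
      (forall dx : 'cV[R]_n,
         is_dx (gradf f x) (hessf f x) l u xs x ll lu (sigma * mu) cx dx ->
         enorm (stack3 dx
                  (dll (gradf f x) (hessf f x) l u xs x ll lu (sigma * mu) cl dx)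
                  (dlu (gradf f x) (hessf f x) l u xs x ll lu (sigma * mu) cu dx)
                - newton f l u (sigma * mu) x ll lu) <= C * mu ^+ 2).
Proof.
move=> [hD1 [hD2 hLip]] hlu_ hKKT hxs hlls0 hlus0 hcl0 hcu0 hsl hsu hPD hdelta
  [K0 hK0] hmuhat [Lt hLt] htraj hsig hC1.
have [r0 [hr0 [L0 hL0]]] := hLip xs.
pose Mh := \sum_i \sum_j `|hessf f xs i j| + `|L0| * r0 + 1.
have hSH : 0 <= \sum_i \sum_j `|hessf f xs i j|.
  by apply: sumr_ge0 => i _; apply: sumr_ge0 => j _; exact: normr_ge0.
have hMh : 0 < Mh.
  by rewrite /Mh ltr_pwDr // addr_ge0 // mulr_ge0 // ltW.
have hHb : forall y, enorm (y - xs) < r0 -> forall i j, `|hessf f y i j| <= Mh.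
  move=> y hy i j.
  have h0 : enorm (xs - xs) < r0 by rewrite subrr enorm0.
  have hf := hL0 y xs hy h0.
  have e1 : `|hessf f y i j - hessf f xs i j| <= frob (hessf f y - hessf f xs).
    by rewrite -mxBE; exact: entry_le_frob.
  have e2 : L0 * enorm (y - xs) <= `|L0| * r0.
    apply: le_trans (ler_norm _) _; rewrite normrM (ger0_norm (enorm_ge0 _)).
    by apply: ler_wpM2l; [exact: normr_ge0|exact: ltW].
  have e3 : `|hessf f xs i j| <= \sum_i \sum_j `|hessf f xs i j|.
    apply: le_trans (le_sum_abs (fun j => hessf f xs i j) j) _.
    rewrite [X in _ <= X](bigD1 i) //= lerDl; apply: sumr_ge0 => k _; apply: sumr_ge0 => k' _; exact: normr_ge0.
  have := ler_normD (hessf f y i j - hessf f xs i j) (hessf f xs i j).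
  rewrite subrK /Mh => h4.
  apply: le_trans h4 _.
  apply: le_trans (lerD (le_trans e1 (le_trans hf e2)) e3) _.
  by rewrite addrC lerDl.
have hpq i : 0 < Num.min ((xs i 0 - l i 0) + lls i 0) ((u i 0 - xs i 0) + lus i 0).
  by rewrite lt_min hsl hsu.
have [e [he hei]] := pos_lb hpq.
have hep i : e <= (xs i 0 - l i 0) + lls i 0 /\ e <= (u i 0 - xs i 0) + lus i 0.
  by have := hei i; rewrite le_min => /andP.
clear hei.
pose eta := e / 2.
have heta : 0 < eta by rewrite divr_gt0.
pose K := `|K0| + 1.
have hK : 0 < K by apply: ltr_wpDl (normr_ge0 _) ltr01.
pose Am := (1 + C1) / eta.
have hAm : 0 < Am by rewrite divr_gt0 // addr_gt0.
pose B := K * (3 * n%:R * (C1 + 1)).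
have hB : 0 <= B.
  apply: mulr_ge0; first exact: ltW.
  by apply: mulr_ge0; [apply: mulr_ge0|apply: addr_ge0; rewrite ?ltW].
pose eta' := Num.min eta (r0 / (n%:R + 1)).
have hn1 : 0 < n%:R + 1 :> R by apply: ltr_wpDl (ler0n _ _) ltr01.
have heta' : 0 < eta' by rewrite lt_min heta divr_gt0.
pose rho := eta' / 2.
pose c4 := `|C4| + 1.
have hc4 : 0 < c4 by apply: ltr_wpDl (normr_ge0 _) ltr01.
pose cs := 4 * n%:R ^+ 2 * K * Am * Mh.
have hcs : 0 <= cs.
  rewrite /cs; apply: mulr_ge0; last exact: ltW.
  apply: mulr_ge0; last exact: ltW.
  apply: mulr_ge0; last exact: ltW.
  by apply: mulr_ge0; [exact: ler0n|apply: exprn_ge0; exact: ler0n].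
pose mubar := Num.min (Num.min muhat 1) (Num.min (eta' / (2 * c4))
                  (Num.min (cs + 1)^-1 (eta / (2 * Am * Mh)))).
have hcs1 : 0 < cs + 1 by apply: ltr_wpDl hcs ltr01.
have hmubar : 0 < mubar.
  rewrite !lt_min hmuhat ltr01 divr_gt0 ?mulr_gt0 //.
    by rewrite invr_gt0 hcs1.
  by rewrite invr_gt0; apply: mulr_gt0 => //; apply: mulr_gt0.

have hrho : 0 < rho by rewrite divr_gt0.
have hC : 0 < Cc n C1 K Mh eta Am B + 1.
  have hE1 := E1c_ge0' n hMh heta hAm hB; have hE2 := E2c_ge0 n hK hMh heta hAm hB.
  have [g1 g2 g3 g4] := Gc_parts n hK hMh heta hAm hC1 hB.
  apply: ltr_wpDl ltr01.
  have hE : 0 <= Ecc n K Mh eta Am B by rewrite /Ecc addr_ge0.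
  have hG : 0 <= Gc n C1 K Mh eta Am B by rewrite /Gc !addr_ge0.
  by rewrite /Cc !addr_ge0 // mulr_ge0.
exists rho, mubar, (Cc n C1 K Mh eta Am B + 1).
split => //; split; first by rewrite hmubar /= /mubar !ge_min lexx.
split => //.
move=> mu x ll lu /andP [mu0 mub] hball hx hll hlu hnear hF cx cl cu.
have hmb := mub; rewrite /mubar !le_min in hmb.
case/andP: hmb => /andP [mu_hat mu1] /andP [mu_c4 /andP [mu_cs mu_am]].
have hsmall1 : 4 * n%:R ^+ 2 * K * Am * Mh * mu <= 1.
  rewrite -/cs; apply: le_trans (_ : cs * (cs + 1)^-1 <= 1).
    by apply: ler_wpM2l.
  by rewrite ler_pdivrMr // mul1r lerDl.
have hsmall2 : 2 * Am * Mh * mu <= eta.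
  move: mu_am; rewrite ler_pdivlMr; first by rewrite mulrC.
  by apply: mulr_gt0 => //; apply: mulr_gt0.
have hC4 : C4 * mu <= eta' / 2.
  apply: le_trans (_ : c4 * mu <= _).
    by apply: ler_wpM2r; [exact: ltW|apply: le_trans (ler_norm C4) _; rewrite lerDl].
  have h2c4 : 0 < 2 * c4 by apply: mulr_gt0.
  move: mu_c4; rewrite ler_pdivlMr // => h; rewrite ler_pdivlMr //.
  by apply: le_trans h; rewrite le_eqVlt; apply/orP; left; apply/eqP; ring.
have [_ [_ htr]] := htraj mu (introT andP (conj mu0 mu_hat)).
have cls i := close3 i hnear htr.
have hr' : rho + C4 * mu <= eta' by rewrite /rho; move: hC4; clear; lra.
have he' : eta' <= eta by rewrite /eta' ge_min lexx.
have he'r : eta' <= r0 / (n%:R + 1) by rewrite /eta' ge_min lexx orbT.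
have hdx i : `|x i 0 - xs i 0| < eta' by case: (cls i) => h _ _; apply: lt_le_trans h hr'.
have hdl i : `|ll i 0 - lls i 0| < eta' by case: (cls i) => _ h _; apply: lt_le_trans h hr'.
have hdu i : `|lu i 0 - lus i 0| < eta' by case: (cls i) => _ _ h; apply: lt_le_trans h hr'.
have hxr : enorm (x - xs) < r0.
  apply: le_lt_trans (enorm_le_sum _) _.
  apply: le_lt_trans (_ : _ <= n%:R * eta') _.
    by apply: sum_le_n => i; rewrite mxBE; exact: ltW (hdx i).
  apply: le_lt_trans (_ : _ <= n%:R * (r0 / (n%:R + 1))) _.
    by apply: ler_wpM2l => //; exact: ler0n.
  have -> : n%:R * (r0 / (n%:R + 1)) = r0 - r0 / (n%:R + 1) by field; rewrite gt_eqF.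
  by rewrite ltrBlDr ltrDl divr_gt0.
have hH := hHb x hxr.
have hF1 i : `|(gradf f x - ll + lu) i 0| <= C1 * mu.
  by apply: le_trans (stack3_le1 _ _ _ i) hF.
have hF2 i : `|ll i 0 * (x i 0 - l i 0) - mu| <= C1 * mu.
  by have := le_trans (stack3_le2 _ _ _ i) hF; rewrite mxE.
have hF3 i : `|lu i 0 * (u i 0 - x i 0) - mu| <= C1 * mu.
  by have := le_trans (stack3_le3 _ _ _ i) hF; rewrite mxE.
have hcl i : ll i 0 * (x i 0 - l i 0) <= (1 + C1) * mu.
  have := le_trans (ler_norm _) (hF2 i); rewrite mulrDl mul1r => h; exact: lerBaux h.
have hcu i : lu i 0 * (u i 0 - x i 0) <= (1 + C1) * mu.
  have := le_trans (ler_norm _) (hF3 i); rewrite mulrDl mul1r => h; exact: lerBaux h.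
have ha i : 0 < x i 0 - l i 0 by case/andP: (hx i) => h _; rewrite subr_gt0.
have hb i : 0 < u i 0 - x i 0 by case/andP: (hx i) => _ h; rewrite subr_gt0.
have h2e : 2 * eta = e by rewrite /eta; field.
have h2l i : 2 * eta <= (xs i 0 - l i 0) + lls i 0 by rewrite h2e; exact: (hep i).1.
have h2u i : 2 * eta <= (u i 0 - xs i 0) + lus i 0 by rewrite h2e; exact: (hep i).2.
have hdx' i : `|(x i 0 - l i 0) - (xs i 0 - l i 0)| < eta'.
  have -> : (x i 0 - l i 0) - (xs i 0 - l i 0) = x i 0 - xs i 0 by ring.
  exact: hdx.
have hdx'' i : `|(u i 0 - x i 0) - (u i 0 - xs i 0)| < eta'.
  have -> : (u i 0 - x i 0) - (u i 0 - xs i 0) = - (x i 0 - xs i 0) by ring.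
  rewrite normrN; exact: hdx.
have hL i := act_facts (ha i) (hll i) heta he' (h2l i) (hcl0 i) (hdx' i) (hdl i) (hcl i).
have hU i := act_facts (hb i) (hlu i) heta he' (h2u i) (hcu0 i) (hdx'' i) (hdu i) (hcu i).
have hAl i : inAl xs l i -> eta <= ll i 0 /\ x i 0 - l i 0 <= Am * mu.
  by rewrite /inAl => /eqP h; apply: (hL i).1; rewrite h subrr.
have hIl i : ~~ inAl xs l i -> eta <= x i 0 - l i 0 /\ ll i 0 <= Am * mu.
  by move=> h; apply: (hL i).2; rewrite subr_eq0.
have hAu i : inAu xs u i -> eta <= lu i 0 /\ u i 0 - x i 0 <= Am * mu.
  by rewrite /inAu => /eqP h; apply: (hU i).1; rewrite h subrr.
have hIu i : ~~ inAu xs u i -> eta <= u i 0 - x i 0 /\ lu i 0 <= Am * mu.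
  by move=> h; apply: (hU i).2; rewrite subr_eq0 eq_sym.
have hexcl i : inAl xs l i -> ~~ inAu xs u i.
  rewrite /inAl /inAu => /eqP ->; apply/negP => /eqP h.
  by have := hlu_ i; rewrite h ltxx.
have [hUn hK1] := hK0 x ll lu hball.
have hKb v : enorm (invmx (Fprime f l u x ll lu) *m v) <= K * enorm v.
  apply: le_trans (hK1 v) _; apply: ler_wpM2r; first exact: enorm_ge0.
  by apply: le_trans (ler_norm K0) _; rewrite lerDl.
pose Nw := newton f l u (sigma * mu) x ll lu.
pose dxN := usubmx (usubmx Nw); pose dlN := dsubmx (usubmx Nw); pose duN := dsubmx Nw.
have hNw : Nw = stack3 dxN dlN duN by exact: stack3_eq.
have hN : Fprime f l u x ll lu *m stack3 dxN dlN duN = - Fmu f l u (sigma * mu) x ll lu.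
  by rewrite -hNw /Nw /newton mulKVmx.
have hms : `|mu - sigma * mu| <= mu.
  case/andP: hsig => s0 s1.
  have h1 : 0 <= mu - sigma * mu by rewrite subr_ge0 ler_piMl // ltW.
  rewrite ger0_norm // lerBlDr lerDl mulr_ge0 // ltW //.
have hc2 (p : R) : `|p - mu| <= C1 * mu -> `|p - sigma * mu| <= (C1 + 1) * mu.
  move=> hp; have -> : p - sigma * mu = (p - mu) + (mu - sigma * mu) by ring.
  apply: le_trans (ler_normD _ _) _; rewrite mulrDl mul1r; exact: lerD.
have hFs : enorm (Fmu f l u (sigma * mu) x ll lu) <= 3 * n%:R * (C1 + 1) * mu.
  rewrite /Fmu; apply: le_trans (enorm_stack3_le _ _ _) _.
  have -> : 3 * n%:R * (C1 + 1) * mu = n%:R * ((C1 + 1) * mu) + n%:R * ((C1 + 1) * mu)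
            + n%:R * ((C1 + 1) * mu) by ring.
  apply: lerD; first apply: lerD.
  - apply: sum_le_n => i; apply: le_trans (hF1 i) _.
    by apply: ler_wpM2r; [exact: ltW|rewrite lerDl].
  - by apply: sum_le_n => i; rewrite mxE; apply: hc2; exact: hF2.
  - by apply: sum_le_n => i; rewrite mxE; apply: hc2; exact: hF3.
have hNb : enorm (stack3 dxN dlN duN) <= B * mu.
  rewrite -hNw /Nw /newton; apply: le_trans (hKb _) _; rewrite enormN.
  have -> : B * mu = K * (3 * n%:R * (C1 + 1) * mu) by rewrite /B; ring.
  by apply: ler_wpM2l => //; exact: ltW.
have hBx i : `|dxN i 0| <= B * mu by exact: le_trans (stack3_le1 _ _ _ i) hNb.
have hBl i : `|dlN i 0| <= B * mu by exact: le_trans (stack3_le2 _ _ _ i) hNb.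
have hBu i : `|duN i 0| <= B * mu by exact: le_trans (stack3_le3 _ _ _ i) hNb.
split.
  move=> i hi _; exact: (dcoef_nz hH heta hAm mu0 ha hb hll hlu hAl hAu hsmall2 hi).
split.
  have [dx hdx0] := dx_exists (sigma * mu) hUn hK hKb hMh hH hAm mu0 ha hb hAl hAu hexcl hsmall1 cx.
  exists dx; split => // dx2 hdx2.
  exact: (dx_unique hUn hK hKb hMh hH hAm mu0 ha hb hAl hAu hexcl hsmall1 hdx0 hdx2).
move=> dx hdx1.
rewrite -/Nw hNw.
apply: le_trans (final_est hUn hK hKb hMh hH heta hAm mu0 mu1 hC1 ha hb hll hlu hcl hcu
   hAl hIl hAu hIu hexcl hsmall1 hsmall2 hN hB hBx hBl hBu cl cu hdx1) _.
by apply: ler_wpM2r; [exact: sqr_ge0|rewrite lerDl].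
Qed.
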